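(* Let $(X,d)$ be a compact metric space with $\dim X=0$ and $f\colon X\to X$ an equicontinuous map. Then for every $\epsilon>0$ there is $\delta>0$ such that for every sequence $(x_i)_{i\ge0}$ in $X$ with $d(f(x_i),x_{i+1})\le\delta$ for all $i\ge0$, we have $d(x_i,f^i(x_0))\le\epsilon$ for every $i\ge0$.
   Context: $f$ is equicontinuous if for every $\epsilon>0$ there is $\delta>0$ such that $d(x,y)\le\delta$ implies $\sup_{n\ge0}d(f^n(x),f^n(y))\le\epsilon$. *)

(* Defs.v *)
From Stdlib Require Import Reals.
Open Scope R_scope.

Definition is_metric {X : Type} (d : X -> X -> R) : Prop :=
  (forall x y, 0 <= d x y) /\
  (forall x y, d x y = 0 <-> x = y) /\
  (forall x y, d x y = d y x) /\
  (forall x y z, d x z <= d x y + d y z).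

Definition is_open {X : Type} (d : X -> X -> R) (U : X -> Prop) : Prop :=
  forall x, U x -> exists r, 0 < r /\ forall y, d x y < r -> U y.

Definition compact_metric {X : Type} (d : X -> X -> R) : Prop :=
  forall (I : Type) (U : I -> X -> Prop),
    (forall i, is_open d (U i)) ->
    (forall x, exists i, U i x) ->
    exists l : list I, forall x, exists i, List.In i l /\ U i x.

(* Lebesgue covering dimension <= 0: every finite open cover U_0..U_{n-1}
   has a finite open refinement V_0..V_{m-1} of order <= 0, i.e. whose
   members are pairwise disjoint. *)
Definition covering_dim_le0 {X : Type} (d : X -> X -> R) : Prop :=
  forall (n : nat) (U : nat -> X -> Prop),
    (forall i, (i < n)%nat -> is_open d (U i)) ->
    (forall x, exists i, (i < n)%nat /\ U i x) ->
    exists (m : nat) (V : nat -> X -> Prop),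
      (forall j, (j < m)%nat -> is_open d (V j)) /\
      (forall x, exists j, (j < m)%nat /\ V j x) /\
      (forall j, (j < m)%nat -> exists i, (i < n)%nat /\ forall x, V j x -> U i x) /\
      (forall j k x, (j < m)%nat -> (k < m)%nat -> V j x -> V k x -> j = k).

(* dim X = 0 : covering dimension <= 0 and X nonempty (dim of the empty space is -1) *)
Definition dim_zero {X : Type} (d : X -> X -> R) : Prop :=
  inhabited X /\ covering_dim_le0 d.

Definition iter_f {X : Type} (f : X -> X) (n : nat) (x : X) : X := Nat.iter n f x.

Definition equicontinuous {X : Type} (d : X -> X -> R) (f : X -> X) : Prop :=
  forall eps, 0 < eps -> exists delta, 0 < delta /\
    forall x y, d x y <= delta ->
      forall n : nat, d (iter_f f n x) (iter_f f n y) <= eps.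

(* Main.v *)
Require Import Defs.
From Stdlib Require Import Reals Lra List.
Open Scope R_scope.

Lemma iter_comm {X : Type} (f : X -> X) n y : Nat.iter n f (f y) = f (Nat.iter n f y).
Proof. induction n; simpl; congruence. Qed.

Lemma minlist_pos (l : list R) : (forall r, In r l -> 0 < r) ->
  0 < fold_right Rmin 1 l /\ forall r, In r l -> fold_right Rmin 1 l <= r.
Proof.
  induction l as [|a l IH]; simpl; intros H.
  - split; [lra| tauto].
  - destruct IH as [H1 H2]; [intros; apply H; auto|].
    split.
    + apply Rmin_glb_lt; auto.
    + intros r [<-|Hr]. apply Rmin_l. eapply Rle_trans; [apply Rmin_r| auto].
Qed.

Theorem lemma3p2 (X : Type) (d : X -> X -> R) (f : X -> X)
  (Hmet : is_metric d) (Hcpt : compact_metric d) (Hdim : dim_zero d)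
  (Heq : equicontinuous d f) :
  forall eps, 0 < eps -> exists delta, 0 < delta /\
    forall x : nat -> X,
      (forall i : nat, d (f (x i)) (x (S i)) <= delta) ->
      forall i : nat, d (x i) (iter_f f i (x O)) <= eps.
Proof.
  destruct Hmet as [Hpos [Hzero [Hsym Htri]]].
  destruct Hdim as [[x0] Hdim].
  intros eps Heps.
  assert (Hball : forall c r, is_open d (fun y => d c y < r)).
  { intros c r y Hy. exists (r - d c y). split; [lra|].
    intros z Hz. specialize (Htri c y z). lra. }
  destruct (Hcpt X (fun c y => d c y < eps/2)) as [l Hl].
  { intros; apply Hball. }
  { intros y. exists y. destruct (Hzero y y) as [_ H]. rewrite H; auto; lra. }
  destruct (Hdim (length l) (fun i y => d (nth i l x0) y < eps/2)) as
    [m [V [HVo [HVc [HVr HVd]]]]].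
  { intros; apply Hball. }
  { intros y. destruct (Hl y) as [c [Hc Hcy]].
    destruct (In_nth l c x0 Hc) as [i [Hi Hn]]. exists i. split; auto.
    rewrite Hn; auto. }
  set (Sm := fun a b => forall j, (j < m)%nat -> (V j a <-> V j b)).
  (* Lebesgue number *)
  set (I := {r : R | 0 < r}).
  destruct (Hcpt I (fun r a => exists c j, (j < m)%nat /\ d c a < proj1_sig r /\
        forall b, d c b < 2 * proj1_sig r -> V j b)) as [L HL].
  { intros r a [c [j [Hj [Hca Hb]]]]. exists (proj1_sig r - d c a). split; [lra|].
    intros z Hz. exists c, j. split; auto. split; auto.
    specialize (Htri c a z). lra. }
  { intros a. destruct (HVc a) as [j [Hj Ha]].
    destruct (HVo j Hj a Ha) as [r [Hr Hrb]].
    assert (Hr2 : 0 < r/2) by lra. exists (exist (fun r => 0 < r) (r/2) Hr2). exists a, j. simpl. split; auto. split.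
    - destruct (Hzero a a) as [_ H]. rewrite H; auto; lra.
    - intros b Hb. apply Hrb. lra. }
  set (lam := fold_right Rmin 1 (map (@proj1_sig _ _) L)).
  destruct (minlist_pos (map (@proj1_sig _ _) L)) as [Hlam Hlamle].
  { intros r Hr. apply in_map_iff in Hr. destruct Hr as [[r' Hr'] [<- _]]. exact Hr'. }
  fold lam in Hlam, Hlamle.
  assert (HS : forall a b, d a b < lam -> Sm a b).
  { intros a b Hab. destruct (HL a) as [r [Hr [c [j [Hj [Hca Hcb]]]]]].
    assert (lam <= proj1_sig r) by (apply Hlamle; apply in_map; auto).
    assert (Va : V j a) by (apply Hcb; lra).
    assert (Vb : V j b) by (apply Hcb; specialize (Htri c a b); lra).
    intros k Hk; split; intros HH.
    - rewrite (HVd k j a Hk Hj HH Va); auto.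
    - rewrite (HVd k j b Hk Hj HH Vb); auto. }
  destruct (Heq (lam/2) ltac:(lra)) as [delta [Hdel Hd]].
  exists delta. split; auto.
  intros x Hx.
  assert (Hrel : forall i n, Sm (iter_f f n (x i)) (iter_f f n (iter_f f i (x O)))).
  { induction i as [|i IH]; intros n.
    - intros j _; tauto.
    - assert (H1 : Sm (iter_f f n (x (S i))) (iter_f f n (f (x i)))).
      { apply HS. rewrite Hsym. specialize (Hd _ _ (Hx i) n). lra. }
      specialize (IH (S n)). unfold iter_f in *. simpl in IH.
      rewrite <- (iter_comm f n (x i)), <- (iter_comm f n (Nat.iter i f (x O))) in IH.
      intros j Hj. rewrite (H1 j Hj). apply IH; auto. }
  intros i. specialize (Hrel i O). unfold iter_f in Hrel; simpl in Hrel.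
  destruct (HVc (x i)) as [j [Hj Ha]].
  pose proof (proj1 (Hrel j Hj) Ha) as Hb.
  destruct (HVr j Hj) as [k [Hk Hsub]].
  pose proof (Hsub _ Ha). pose proof (Hsub _ Hb).
  specialize (Htri (x i) (nth k l x0) (iter_f f i (x O))).
  rewrite (Hsym (x i) (nth k l x0)) in Htri. unfold iter_f in *. lra.
Qed.
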